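(* Let $\{R_i\}_i$ be an arbitrary family of module-avoidance rings and $R=\prod_i R_i$. Then $R$ is a module-avoidance ring if and only if $R/I$ is a module-avoidance ring, where $I=\bigoplus_i R_i\subseteq R$.
   Context: All rings are commutative with $1\neq 0$. An $R$-module $M$ has avoidance if whenever $M=\bigcup_{k=1}^n M_k$ for finitely many $R$-submodules $M_k$, then $M=M_k$ for some $k$. A ring $R$ is a module-avoidance ring if every $R$-module has avoidance. *)

(* Defs.v *)
From HB Require Import structures.
From mathcomp Require Import all_boot all_algebra.
From mathcomp Require Import boolp.
From mathcomp Require Import generic_quotient ring_quotient.

Set Implicit Arguments.
Unset Strict Implicit.
Unset Printing Implicit Defensive.

Import GRing.Theory.
Local Open Scope ring_scope.
Local Open Scope quotient_scope.

(* Rings are commutative; we use comPzRingType (the zero ring allowed)  *)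
(* so that R/I makes sense even when I = R (finite families).           *)

Definition is_submodule (R : pzRingType) (M : lmodType R) (S : M -> Prop) :=
  S 0 /\ forall (a : R) (u v : M), S u -> S v -> S (a *: u + v).

Definition has_avoidance (R : pzRingType) (M : lmodType R) : Prop :=
  forall (n : nat) (Mk : 'I_n -> M -> Prop),
    (forall k, is_submodule (Mk k)) ->
    (forall x : M, exists k, Mk k x) ->
    exists k, forall x : M, Mk k x.

Definition module_avoidance_ring (R : comPzRingType) : Prop :=
  forall M : lmodType R, has_avoidance M.

Section DProd.
Variables (I : Type) (R : I -> comPzRingType).

Definition dprod := forall i, R i.

HB.instance Definition _ := Choice.on dprod.

Definition dprod_zero : dprod := fun i => 0.
Definition dprod_add (x y : dprod) : dprod := fun i => x i + y i.
Definition dprod_opp (x : dprod) : dprod := fun i => - x i.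
Definition dprod_one : dprod := fun i => 1.
Definition dprod_mul (x y : dprod) : dprod := fun i => x i * y i.

Lemma dprod_addA : associative dprod_add.
Proof. by move=> x y z; apply: functional_extensionality_dep => i; rewrite /dprod_add addrA. Qed.
Lemma dprod_addC : commutative dprod_add.
Proof. by move=> x y; apply: functional_extensionality_dep => i; rewrite /dprod_add addrC. Qed.
Lemma dprod_add0 : left_id dprod_zero dprod_add.
Proof. by move=> x; apply: functional_extensionality_dep => i; rewrite /dprod_add add0r. Qed.
Lemma dprod_addN : left_inverse dprod_zero dprod_opp dprod_add.
Proof. by move=> x; apply: functional_extensionality_dep => i; rewrite /dprod_add addNr. Qed.

HB.instance Definition _ :=
  GRing.isZmodule.Build dprod dprod_addA dprod_addC dprod_add0 dprod_addN.

Lemma dprod_mulA : associative dprod_mul.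
Proof. by move=> x y z; apply: functional_extensionality_dep => i; rewrite /dprod_mul mulrA. Qed.
Lemma dprod_mulC : commutative dprod_mul.
Proof. by move=> x y; apply: functional_extensionality_dep => i; rewrite /dprod_mul mulrC. Qed.
Lemma dprod_mul1 : left_id dprod_one dprod_mul.
Proof. by move=> x; apply: functional_extensionality_dep => i; rewrite /dprod_mul mul1r. Qed.
Lemma dprod_mulDl : left_distributive dprod_mul +%R.
Proof. by move=> x y z; apply: functional_extensionality_dep => i; rewrite /dprod_mul /= /dprod_add mulrDl. Qed.

HB.instance Definition _ :=
  GRing.Zmodule_isComPzRing.Build dprod dprod_mulA dprod_mulC dprod_mul1 dprod_mulDl.

(* the direct sum  (+)_i R_i  inside  prod_i R_i : finitely supported elements *)
Definition dsum_prop (x : dprod) : Prop :=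
  exists (n : nat) (f : 'I_n -> I), forall i, (forall k, f k <> i) -> x i = 0.
Definition dsum : {pred dprod} := fun x => `[< dsum_prop x >].

Lemma dsum0 : 0 \in dsum.
Proof.
apply/asboolP; exists 0%N, (fun k : 'I_0 => match k with Ordinal _ h => False_rect I (notF h) end) => i _.
by [].
Qed.

Lemma dsumB : {in dsum &, forall x y, x - y \in dsum}.
Proof.
move=> x y /asboolP[n [f hf]] /asboolP[m [g hg]]; apply/asboolP.
exists (n + m)%N, (fun k => match split k with inl a => f a | inr b => g b end) => i hi.
have hs' : forall k, f k <> i.
  move=> k e; apply: (hi (lshift m k)).
  by have -> : split (lshift m k) = inl k by exact: (unsplitK (inl _ k)).
have ht' : forall k, g k <> i.
  move=> k e; apply: (hi (rshift n k)).
  by have -> : split (rshift n k) = inr k by exact: (unsplitK (inr _ k)).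
have -> : (x - y) i = x i - y i by [].
by rewrite (hf i hs') (hg i ht') subrr.
Qed.

Lemma dsumM (a x : dprod) : x \in dsum -> a * x \in dsum.
Proof.
move=> /asboolP[n [f hf]]; apply/asboolP; exists n, f => i hi.
have -> : (a * x) i = a i * x i by [].
by rewrite hf // mulr0.
Qed.

End DProd.

(* Quotient of a commutative ring by an ideal (the ideal may be the     *)
(* whole ring, in which case the quotient is the zero ring).            *)
Record ideal (R : comPzRingType) := Ideal {
  ideal_pred :> {pred R};
  ideal0 : 0 \in ideal_pred;
  idealB : {in ideal_pred &, forall x y, x - y \in ideal_pred};
  idealM : forall a x, x \in ideal_pred -> a * x \in ideal_pred }.

Section RQuot.
Variables (R : comPzRingType) (J : ideal R).

Definition ideal_zpred : {pred R} := fun x => x \in ideal_pred J.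
Lemma ideal_zpred_closed : zmod_closed ideal_zpred.
Proof. by split; [exact: ideal0 | exact: idealB]. Qed.
HB.instance Definition _ := GRing.isZmodClosed.Build R ideal_zpred
  ideal_zpred_closed.

Definition rquot := Quotient.quot ideal_zpred.
HB.instance Definition _ := GRing.Zmodule.on rquot.

Local Notation piq := (\pi_rquot).

Definition rq_one : rquot := lift_cst rquot 1.
Definition rq_mul := lift_op2 rquot *%R.
Canonical rq_pi_one_morph := PiConst rq_one.

Lemma zpredM a x : x \in ideal_zpred -> a * x \in ideal_zpred.
Proof. exact: idealM. Qed.

Lemma rq_pi_mul : {morph piq : x y / x * y >-> rq_mul x y}.
Proof.
move=> x y; unlock rq_mul; apply/eqP; rewrite piE Quotient.equivE.
rewrite -[_ * _](addrNK (x * repr (piq y))) -mulrBr.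
rewrite -addrA -mulrBl rpredD //.
  by apply: zpredM; rewrite Quotient.idealrBE reprK.
by rewrite mulrC; apply: zpredM; rewrite Quotient.idealrBE reprK.
Qed.
Canonical rq_pi_mul_morph := PiMorph2 rq_pi_mul.

Lemma rq_mulA : associative rq_mul.
Proof. by move=> x y z; rewrite -[x]reprK -[y]reprK -[z]reprK !piE mulrA. Qed.
Lemma rq_mulC : commutative rq_mul.
Proof. by move=> x y; rewrite -[x]reprK -[y]reprK !piE mulrC. Qed.
Lemma rq_mul1 : left_id rq_one rq_mul.
Proof. by move=> x; rewrite -[x]reprK !piE mul1r. Qed.
Lemma rq_mulDl : left_distributive rq_mul +%R.
Proof.
move=> x y z; rewrite -[x]reprK -[y]reprK -[z]reprK.
by rewrite !piE mulrDl.
Qed.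

HB.instance Definition _ :=
  GRing.Zmodule_isComPzRing.Build rquot rq_mulA rq_mulC rq_mul1 rq_mulDl.

End RQuot.

Definition dsum_ideal (I : Type) (R : I -> comPzRingType) : ideal (dprod R) :=
  @Ideal (dprod R) (@dsum I R) (@dsum0 I R) (@dsumB I R) (@dsumM I R).

(* Main.v *)
Require Import Defs.
From HB Require Import structures.
From mathcomp Require Import all_boot all_algebra.
From mathcomp Require Import boolp generic_quotient ring_quotient.
Set Implicit Arguments. Unset Strict Implicit. Unset Printing Implicit Defensive.
Import GRing.Theory.
Local Open Scope ring_scope.
Local Open Scope quotient_scope.

Lemma sub_scale (A : pzRingType) (M : lmodType A) (S : M -> Prop) a u :
  is_submodule S -> S u -> S (a *: u).
Proof. by move=> [h0 hc] hu; rewrite -[_ *: _]addr0; apply: hc. Qed.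
Lemma sub_add (A : pzRingType) (M : lmodType A) (S : M -> Prop) u v :
  is_submodule S -> S u -> S v -> S (u + v).
Proof. by move=> [h0 hc] hu hv; rewrite -[u]scale1r; apply: hc. Qed.
Lemma sub_opp (A : pzRingType) (M : lmodType A) (S : M -> Prop) u :
  is_submodule S -> S u -> S (- u).
Proof. by move=> hS hu; rewrite -scaleN1r; apply: sub_scale. Qed.
Lemma sub_sub (A : pzRingType) (M : lmodType A) (S : M -> Prop) u v :
  is_submodule S -> S u -> S v -> S (u - v).
Proof. by move=> hS hu hv; apply: sub_add => //; apply: sub_opp. Qed.

Lemma strong_avoid (A : pzRingType) (N : lmodType A) : has_avoidance N ->
  forall n (Nk : 'I_n -> N -> Prop), (forall k, is_submodule (Nk k)) ->
  exists q, forall k, Nk k q -> forall y, Nk k y.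
Proof.
move=> hav n Nk hsub.
apply: contrapT => hno.
pose bad k := ~ (forall y, Nk k y).
pose N' k x := Nk k x /\ (bad k \/ x = 0).
have hsub' : forall k, is_submodule (N' k).
  move=> k; rewrite /N'; split.
    by split; [by case: (hsub k) | by right].
  move=> a u v [hu hbu] [hv hbv]; split; first by case: (hsub k) => _ hc; apply: hc.
  case: hbu => [bu|eu]; first by left.
  case: hbv => [bv|ev]; first by left.
  by right; rewrite eu ev scaler0 addr0.
have hcov : forall x, exists k, N' k x.
  move=> x; apply: contrapT => hx.
  apply: hno; exists x => k hk; apply: contrapT => hb.
  by apply: hx; exists k; split => //; left.
have [k hk] := hav n N' hsub' hcov.
have nbk : ~ bad k by move=> bk; apply: bk => y; case: (hk y).
have all0 : forall y : N, y = 0 by move=> y; case: (hk y) => _ [|].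
apply: hno; exists 0 => k' h0 y; by rewrite (all0 y).
Qed.
Section Pullback.
Variables (A B : pzRingType) (f : A -> B).
Hypotheses (f1 : f 1 = 1) (fM : forall a b, f (a * b) = f a * f b)
  (fD : forall a b, f (a + b) = f a + f b).
Variable M : lmodType B.
Definition pb : Type := M.
HB.instance Definition _ := GRing.Zmodule.on pb.
Definition pb_scale (a : A) (m : pb) : pb := (f a) *: (m : M).
Lemma pb_scalerA a b v : pb_scale a (pb_scale b v) = pb_scale (a * b) v.
Proof. by rewrite /pb_scale scalerA fM. Qed.
Lemma pb_scale1r : left_id 1 pb_scale.
Proof. by move=> v; rewrite /pb_scale f1 scale1r. Qed.
Lemma pb_scalerDr : right_distributive pb_scale +%R.
Proof. by move=> a u v; rewrite /pb_scale scalerDr. Qed.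
Lemma pb_scalerDl v : {morph pb_scale^~ v: a b / a + b}.
Proof. by move=> a b; rewrite /pb_scale fD scalerDl. Qed.
HB.instance Definition _ := GRing.Zmodule_isLmodule.Build A pb
  pb_scalerA pb_scale1r pb_scalerDr pb_scalerDl.

Lemma pb_avoid : has_avoidance pb -> has_avoidance M.
Proof.
move=> hav n Mk hsub hcov.
apply: (hav n Mk) => // k; have [h0 hc] := hsub k; split => // a u v hu hv.
exact: (hc (f a) u v).
Qed.
End Pullback.

Section Fwd.
Variables (T : comPzRingType) (J : ideal T).
Lemma piq1 : \pi_(rquot J) (1 : T) = 1 :> rquot J.
Proof. by rewrite piE. Qed.
Lemma piqM (a b : T) : \pi_(rquot J) (a * b) = (\pi_(rquot J) a : rquot J) * \pi_(rquot J) b.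
Proof. by rewrite rq_pi_mul. Qed.
Lemma piqD (a b : T) : \pi_(rquot J) (a + b) = (\pi_(rquot J) a : rquot J) + \pi_(rquot J) b.
Proof. by rewrite piE. Qed.
Lemma fwd : module_avoidance_ring T -> module_avoidance_ring (rquot J).
Proof.
move=> h M; exact: (@pb_avoid T (rquot J) _ piq1 piqM piqD M (h _)).
Qed.
End Fwd.

Section Main.
Variables (I : Type) (R : I -> comNzRingType).
Definition RR i : comPzRingType := R i.
Local Notation P := (dprod RR).

Lemma P_ext (x y : P) : (forall i, x i = y i) -> x = y.
Proof. exact: functional_extensionality_dep. Qed.
Lemma mulPE (x y : P) i : (x * y) i = x i * y i. Proof. by []. Qed.
Lemma addPE (x y : P) i : (x + y) i = x i + y i. Proof. by []. Qed.
Lemma oppPE (x : P) i : (- x) i = - x i. Proof. by []. Qed.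
Lemma onePE i : (1 : P) i = 1. Proof. by []. Qed.
Lemma zeroPE i : (0 : P) i = 0. Proof. by []. Qed.

Definition ind (C : I -> bool) : P := fun i => if C i then 1 else 0.
Lemma indE C i : ind C i = if C i then 1 else 0. Proof. by []. Qed.

Definition ej (j : I) : P := ind (fun i => `[< i = j >]).

Definition inj (j : I) (a : R j) : P := fun i =>
  match pselect (j = i) with left e => eq_rect j RR a i e | right _ => 0 end.
Lemma inj_eq j (a : R j) : inj a j = a.
Proof.
rewrite /inj; case: (pselect (j = j)) => [e|//].
by rewrite (Prop_irrelevance e erefl).
Qed.
Lemma inj_neq j (a : R j) i : j <> i -> inj a i = 0.
Proof. by rewrite /inj; case: (pselect (j = i)). Qed.
Lemma ej_eq j : ej j j = 1.
Proof. by rewrite /ej indE asboolT. Qed.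
Lemma ej_neq j i : j <> i -> ej j i = 0.
Proof. by move=> ne; rewrite /ej indE asboolF // => e; apply: ne. Qed.

Lemma injM j (a b : R j) : inj (a * b) = inj a * inj b.
Proof.
apply: P_ext => i; rewrite mulPE; case: (pselect (j = i)) => [<-|ne].
  by rewrite !inj_eq.
by rewrite !inj_neq // mulr0.
Qed.
Lemma injD j (a b : R j) : inj (a + b) = inj a + inj b.
Proof.
apply: P_ext => i; rewrite addPE; case: (pselect (j = i)) => [<-|ne].
  by rewrite !inj_eq.
by rewrite !inj_neq // addr0.
Qed.
Lemma inj1 j : inj (1 : R j) = ej j.
Proof.
apply: P_ext => i; case: (pselect (j = i)) => [<-|ne].
  by rewrite inj_eq ej_eq.
by rewrite inj_neq // ej_neq.
Qed.
Lemma ej_inj j (a : R j) : ej j * inj a = inj a.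
Proof. by rewrite -inj1 -injM mul1r. Qed.
Lemma ejK j : ej j * ej j = ej j.
Proof. by rewrite -inj1 -injM mul1r. Qed.

Section Comp.
Variables (M : lmodType P) (j : I).
Definition compp : {pred M} := fun x => ej j *: x == x.
Lemma compp_closed : zmod_closed compp.
Proof.
split; first by rewrite /compp unfold_in /= scaler0.
move=> x y; rewrite /compp !unfold_in /= => /eqP hx /eqP hy.
by rewrite scalerBr hx hy.
Qed.
HB.instance Definition _ := GRing.isZmodClosed.Build M compp compp_closed.
Definition Ecomp := {x : M | x \in compp}.
HB.instance Definition _ := [isSub of Ecomp for (@sval M (fun x => x \in compp))].
HB.instance Definition _ := [Choice of Ecomp by <:].
HB.instance Definition _ := [SubChoice_isSubZmodule of Ecomp by <:].
Lemma ec_scale_in (a : R j) (x : Ecomp) : inj a *: val x \in compp.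
Proof. by rewrite /compp unfold_in /= scalerA ej_inj. Qed.
Definition ec_scale (a : R j) (x : Ecomp) : Ecomp := @exist M (fun y => y \in compp) _ (ec_scale_in a x).
Lemma ec_scaleE a x : val (ec_scale a x) = inj a *: val x. Proof. by []. Qed.
Lemma ec_scalerA a b v : ec_scale a (ec_scale b v) = ec_scale (a * b) v.
Proof. by apply: val_inj; rewrite !ec_scaleE scalerA injM. Qed.
Lemma ec_scale1r : left_id 1 ec_scale.
Proof.
move=> v; apply: val_inj; rewrite ec_scaleE inj1.
by have := valP v; rewrite /compp unfold_in /= => /eqP.
Qed.
Lemma ec_scalerDr : right_distributive ec_scale +%R.
Proof. move=> a u v; apply: val_inj; rewrite raddfD /=; exact: scalerDr. Qed.
Lemma ec_scalerDl v : {morph ec_scale^~ v: a b / a + b}.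
Proof. by move=> a b; apply: val_inj; rewrite raddfD /= injD scalerDl. Qed.
HB.instance Definition _ := GRing.Zmodule_isLmodule.Build (RR j) Ecomp
  ec_scalerA ec_scale1r ec_scalerDr ec_scalerDl.
End Comp.

Lemma comp_point (M : lmodType P) (j : I) (hj : module_avoidance_ring (RR j))
  n (Mk : 'I_n -> M -> Prop) : (forall k, is_submodule (Mk k)) ->
  exists p, ej j *: p = p /\ forall k, Mk k p -> forall x, Mk k (ej j *: x).
Proof.
move=> hsub.
have := @strong_avoid _ (Ecomp M j) (hj _) n (fun k y => Mk k (val y)).
case.
  move=> k; have [h0 hc] := hsub k; split; first by rewrite raddf0.
  by move=> a u v hu hv; rewrite raddfD /=; apply: hc.
move=> q hq; exists (val q); split.
  by have := valP q; rewrite /compp unfold_in /= => /eqP.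
move=> k hk x.
have hin : ej j *: x \in compp j.
  by rewrite /compp unfold_in /= scalerA ejK.
exact: (hq k hk (@exist M (fun y => y \in compp j) _ hin)).
Qed.

Local Notation D := (@dsum_ideal I RR).
Local Notation DS := (@dsum I RR).

Lemma dsumD (r s : P) : r \in DS -> s \in DS -> r + s \in DS.
Proof.
move=> hr hs; have h0s : 0 - s \in DS by apply: dsumB => //; exact: dsum0.
by have := dsumB hr h0s; rewrite sub0r opprK.
Qed.

Section QMod.
Variable M : lmodType P.
Definition Jp : {pred M} := fun x => `[< exists r, r \in DS /\ r *: x = x >].
Lemma JpP x : reflect (exists r, r \in DS /\ r *: x = x) (x \in Jp).
Proof. by rewrite unfold_in; apply: asboolP. Qed.

Lemma Jp_closed : zmod_closed Jp.
Proof.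
split; first by apply/JpP; exists 0; split; [exact: dsum0 | rewrite scaler0].
move=> x y /JpP[r [hr hx]] /JpP[s [hs hy]]; apply/JpP.
exists (r + s - r * s); split.
  by apply: dsumB; [apply: dsumD | apply: dsumM].
have e1 : (r * s) *: x = s *: x by rewrite mulrC -scalerA hx.
have e2 : (r * s) *: y = r *: y by rewrite -scalerA hy.
rewrite scalerBr !scalerBl !scalerDl e1 e2 hx hy.
by rewrite addrK addrAC subrr add0r.
Qed.
HB.instance Definition _ := GRing.isZmodClosed.Build M Jp Jp_closed.

Lemma Jp_scale (a : P) x : x \in Jp -> a *: x \in Jp.
Proof.
move=> /JpP[r [hr hx]]; apply/JpP; exists r; split => //.
by rewrite scalerA mulrC -scalerA hx.
Qed.

Lemma Jp_I (r : P) x : r \in DS -> r *: x \in Jp.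
Proof.
move=> hr; apply/JpP.
pose s : P := fun i => if r i == 0 then 0 else 1.
exists s; split.
  move: hr; rewrite /dsum !unfold_in => /asboolP[m [f hf]]; apply/asboolP.
  exists m, f => i hi; rewrite /s (hf i hi) eqxx //.
rewrite scalerA; congr (_ *: _); apply: P_ext => i; rewrite mulPE /s.
by case: eqP => [->|]; rewrite ?mul0r ?mul1r.
Qed.

Definition Q := Quotient.quot Jp.
HB.instance Definition _ := GRing.Zmodule.on Q.
Local Notation piQ := (\pi_Q).

Lemma piQ_eq (x y : M) : (piQ x = piQ y) <-> (x - y \in Jp).
Proof. by rewrite Quotient.idealrBE; split => [->|/eqP]. Qed.

Lemma rqD_eq (a b : P) : (\pi_(rquot D) a = \pi_(rquot D) b) <-> (a - b \in DS).
Proof. by rewrite (@Quotient.idealrBE _ (ideal_zpred D)); split => [->|/eqP]. Qed.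

Definition qscale (a : rquot D) (x : Q) : Q := piQ (repr a *: repr x).

Lemma qscale_pi a x : qscale (\pi_(rquot D) a) (piQ x) = piQ (a *: x).
Proof.
rewrite /qscale; apply/piQ_eq.
have ha : repr (\pi_(rquot D) a) - a \in DS by apply/rqD_eq; rewrite reprK.
have hx : repr (piQ x) - x \in Jp by apply/piQ_eq; rewrite reprK.
set ra := repr _ in ha *; set rx := repr _ in hx *.
have -> : ra *: rx - a *: x = ra *: (rx - x) + (ra - a) *: x.
  by rewrite scalerBr scalerBl addrA addrNK.
by apply: rpredD; [apply: Jp_scale | apply: Jp_I].
Qed.
Lemma piQD (x y : M) : piQ (x + y) = piQ x + piQ y.
Proof. by rewrite piE. Qed.

Lemma rqsurj (a : rquot D) : exists a', a = \pi_(rquot D) a'.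
Proof. by exists (repr a); rewrite reprK. Qed.
Lemma Qsurj (x : Q) : exists x', x = piQ x'.
Proof. by exists (repr x); rewrite reprK. Qed.

Lemma qscalerA a b v : qscale a (qscale b v) = qscale (a * b) v.
Proof.
have [a' ->] := rqsurj a; have [b' ->] := rqsurj b; have [v' ->] := Qsurj v.
by rewrite !qscale_pi -piqM qscale_pi scalerA.
Qed.
Lemma qscale1r : left_id 1 qscale.
Proof. by move=> v; have [v' ->] := Qsurj v; rewrite -piq1 qscale_pi scale1r. Qed.
Lemma qscalerDr : right_distributive qscale +%R.
Proof.
move=> a u v; have [a' ->] := rqsurj a; have [u' ->] := Qsurj u; have [v' ->] := Qsurj v.
by rewrite -piQD !qscale_pi scalerDr piQD.
Qed.
Lemma qscalerDl v : {morph qscale^~ v: a b / a + b}.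
Proof.
move=> a b /=; have [a' ->] := rqsurj a; have [b' ->] := rqsurj b; have [v' ->] := Qsurj v.
by rewrite -piqD !qscale_pi scalerDl piQD.
Qed.
HB.instance Definition _ := GRing.Zmodule_isLmodule.Build (rquot D) Q
  qscalerA qscale1r qscalerDr qscalerDl.
Lemma piQ0 : piQ 0 = 0. Proof. by rewrite piE. Qed.
Lemma scaleQ_pi (a : P) (x : M) : (\pi_(rquot D) a : rquot D) *: (piQ x : Q) = piQ (a *: x).
Proof. exact: qscale_pi. Qed.

Lemma quot_point (hq : module_avoidance_ring (rquot D)) (e : P) n
  (Mk : 'I_n -> M -> Prop) : (forall k, is_submodule (Mk k)) ->
  exists x, forall k, (exists m, Mk k m /\ e *: x - m \in Jp) ->
     forall y, exists m, Mk k m /\ e *: y - m \in Jp.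
Proof.
move=> hsub.
pose Sk k (z : Q) := exists m, Mk k m /\ e *: repr z - m \in Jp.
have SkE : forall k x, Sk k (piQ x) <-> exists m, Mk k m /\ e *: x - m \in Jp.
  move=> k x; have hx : repr (piQ x) - x \in Jp by apply/piQ_eq; rewrite reprK.
  have hex : e *: repr (piQ x) - e *: x \in Jp by rewrite -scalerBr Jp_scale.
  split=> -[m [hm hin]]; exists m; split => //.
    have -> : e *: x - m = (e *: repr (piQ x) - m) - (e *: repr (piQ x) - e *: x).
      by rewrite opprB [RHS]addrC subrKA.
    exact: rpredB.
  have -> : e *: repr (piQ x) - m = (e *: repr (piQ x) - e *: x) + (e *: x - m).
    by rewrite subrKA.
  exact: rpredD.
have hS : forall k, is_submodule (Sk k).
  move=> k; split.
    rewrite -piQ0; apply/SkE; exists 0; split; first by case: (hsub k).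
    by rewrite scaler0 subrr rpred0.
  move=> a u v; have [a' ->] := rqsurj a; have [u' ->] := Qsurj u; have [v' ->] := Qsurj v.
  rewrite scaleQ_pi -piQD => /SkE[m1 [h1 i1]] /SkE[m2 [h2 i2]]; apply/SkE.
  exists (a' *: m1 + m2); split; first by case: (hsub k) => _; apply.
  have -> : e *: (a' *: u' + v') - (a' *: m1 + m2) = a' *: (e *: u' - m1) + (e *: v' - m2).
    rewrite scalerDr !scalerBr !scalerA mulrC opprD !addrA; congr (_ - _).
    by rewrite addrAC.
  by apply: rpredD => //; apply: Jp_scale.
have [z hz] := strong_avoid (hq Q) hS.
have [x ex] := Qsurj z; rewrite ex in hz.
exists x => k /SkE hk y; apply/SkE; exact: hz.
Qed.
End QMod.

Lemma indM (C C' : I -> bool) : ind C * ind C' = ind (fun i => C i && C' i).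
Proof.
apply: P_ext => i; rewrite mulPE !indE.
by case: (C i); case: (C' i); rewrite ?mulr1 ?mul0r ?mulr0.
Qed.

Lemma ind_ej (C : I -> bool) j : C j -> ind C * ej j = ej j.
Proof.
move=> hj; apply: P_ext => i; rewrite mulPE indE.
case: (pselect (j = i)) => [<-|ne]; first by rewrite hj mul1r.
by rewrite ej_neq // mulr0.
Qed.

Lemma ind_ej0 (C : I -> bool) j : ~~ C j -> ind C * ej j = 0.
Proof.
move=> hj; apply: P_ext => i; rewrite mulPE indE.
case: (pselect (j = i)) => [<-|ne]; first by rewrite (negbTE hj) mul0r.
by rewrite ej_neq // mulr0.
Qed.

Lemma L_supp (M : lmodType P) (S : M -> Prop) (hS : is_submodule S)
  (C : I -> bool) : (forall j, C j -> forall x, S (ej j *: x)) ->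
  forall r, r \in DS -> forall y, S ((ind C * r) *: y).
Proof.
move=> hC r; rewrite unfold_in => /asboolP[m [f hf]] y.
elim: m f r hf => [|m IH] f r hf.
  have -> : r = 0.
    by apply: P_ext => i; apply: hf => -[k hk].
  by rewrite mulr0 scale0r; case: hS.
set j := f ord0.
have -> : r = ej j * r + (1 - ej j) * r by rewrite mulrBl mul1r addrC subrK.
rewrite mulrDr scalerDl; apply: sub_add => //.
  case hCj : (C j).
    by rewrite mulrA (mulrC _ (ej j)) -mulrA -scalerA; apply: hC.
  by rewrite mulrA ind_ej0 ?hCj // mul0r scale0r; case: hS.
apply: (IH (fun k => f (lift ord0 k))) => i hi.
rewrite mulPE addPE oppPE onePE.
case: (pselect (j = i)) => [<-|ne]; first by rewrite ej_eq subrr mul0r.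
rewrite (hf i) ?mulr0 // => k; case: (unliftP ord0 k) => [k' ->|->].
  exact: hi.
by move=> e; apply: ne.
Qed.

Lemma sumPE (T : finType) (F : T -> P) i : (\sum_(t : T) F t) i = \sum_(t : T) F t i.
Proof.
by elim/big_rec2: _ => // t a b _ <-.
Qed.

Lemma bwd : (forall i, module_avoidance_ring (RR i)) ->
  module_avoidance_ring (rquot D) -> module_avoidance_ring P.
Proof.
move=> hR hq M n Mk hsub hcov.
have [p hp] := choice (fun j => comp_point (hR j) hsub).
pose Kset j : {set 'I_n} := [set k | `[< forall x, Mk k (ej j *: x) >]].
have KsetP : forall j k, (k \in Kset j) <-> (forall x, Mk k (ej j *: x)).
  by move=> j k; rewrite inE; split => [/asboolP|?]; [|apply/asboolP].
pose eT (T : {set 'I_n}) := ind (fun i => Kset i == T).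
have eTK : forall T, eT T * eT T = eT T.
  by move=> T; rewrite /eT indM; congr ind; apply: funext => i; rewrite andbb.
have hqT : forall T, exists q, eT T *: q = q /\ forall k, Mk k q -> forall y, Mk k (eT T *: y).
  move=> T; case: (pselect (exists j, Kset j = T)) => [[j hj]|nj]; last first.
    have -> : eT T = 0.
      apply: P_ext => i; rewrite /eT indE; case: eqP => // e.
      by case: nj; exists i.
    by exists 0; split; [rewrite scaler0 | move=> k _ y; rewrite scale0r; case: (hsub k)].
  have [x hx] := quot_point hq (eT T) hsub.
  have hTj : eT T * ej j = ej j by apply: ind_ej; rewrite hj eqxx.
  have [hpj hpk] := hp j.
  exists ((eT T - ej j) *: x + p j); split.
    rewrite scalerDr scalerA mulrBr eTK hTj.
    by rewrite -hpj scalerA hTj.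
  move=> k hk.
  have hej : ej j *: ((eT T - ej j) *: x + p j) = p j.
    rewrite scalerDr scalerA mulrBr (mulrC (ej j)) hTj ejK subrr scale0r add0r.
    exact: hpj.
  have hkp : Mk k (p j) by rewrite -hej; apply: sub_scale.
  have hkT : k \in T by rewrite -hj; apply/KsetP; exact: hpk.
  have hall : forall j', Kset j' == T -> forall x, Mk k (ej j' *: x).
    by move=> j' /eqP hj'; apply/KsetP; rewrite hj'.
  have hex : Mk k (eT T *: x).
    have -> : eT T *: x = ((eT T - ej j) *: x + p j - p j) + ej j *: x.
      by rewrite addrK scalerBl subrK.
    apply: sub_add => //; last by apply: (proj1 (KsetP j k)); rewrite hj.
    exact: sub_sub.
  have hxk : exists m, Mk k m /\ eT T *: x - m \in Jp (M:=M).
    by exists (eT T *: x); split => //; rewrite subrr rpred0.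
  move=> y; have [m [hm /JpP[r [hr hrm]]]] := hx k hxk y.
  have -> : eT T *: y = eT T *: m + (eT T * r) *: (eT T *: y - m).
    by rewrite -scalerA hrm scalerBr scalerA eTK addrC subrK.
  apply: sub_add => //; first by apply: sub_scale.
  exact: (L_supp (hsub k) hall hr).
have [qf hqf] := choice hqT.
have eTdis : forall T T', T != T' -> eT T * eT T' = 0.
  move=> T T' ne; apply: P_ext => i; rewrite mulPE /eT !indE.
  case: eqP => [e1|]; last by rewrite mul0r.
  case: eqP => [e2|]; last by rewrite mulr0.
  by case/eqP: ne; rewrite -e1 -e2.
have [k hk] := hcov (\sum_(T : {set 'I_n}) qf T).
have hkT : forall T y, Mk k (eT T *: y).
  move=> T; apply: (proj2 (hqf T)).
  have <- : eT T *: (\sum_(T0 : {set 'I_n}) qf T0) = qf T.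
    rewrite scaler_sumr (bigD1 T) //= (proj1 (hqf T)) big1 ?addr0 // => T' hT'.
    by rewrite -(proj1 (hqf T')) scalerA eTdis ?scale0r // eq_sym.
  exact: sub_scale.
exists k => y.
have -> : y = \sum_(T : {set 'I_n}) eT T *: y.
  rewrite -scaler_suml.
  have -> : \sum_(T : {set 'I_n}) eT T = 1.
    apply: P_ext => i; rewrite sumPE onePE (bigD1 (Kset i)) //= /eT indE eqxx big1 ?addr0 //.
    by move=> T hT; rewrite /eT indE eq_sym (negbTE hT).
  by rewrite scale1r.
apply: big_ind => //; first by case: (hsub k).
by move=> a b; apply: sub_add.
Qed.
End Main.

Theorem corollary3p22 (I : Type) (R : I -> comNzRingType)
  (hR : forall i, module_avoidance_ring (R i)) :
  module_avoidance_ring (dprod (fun i => (R i : comPzRingType))) <->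
  module_avoidance_ring (rquot (dsum_ideal (fun i => (R i : comPzRingType)))).
Proof.
split; first exact: fwd.
exact: (@bwd I R hR).
Qed.
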